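(* Let $F$ be a cofibered groupoid over $C_\Lambda$ with $F(k)$ equivalent to a point, and let $\pi_0F$ be its functor of isomorphism classes of objects. Then $\pi_0F$ has the tangent lifting property if and only if for every $A\in C_\Lambda$ and every $X\in F(A)$ the natural map $T^1(X/A)\to T^1(X_0/k)$ is surjective, where $X_0$ is the restriction of $X$ to $k$.
   Context: $C_\Lambda$ is the category of Artin local $\Lambda$-algebras with residue field $k$, $\Lambda$ a complete noetherian local ring; $A[\epsilon]=A[x]/(x^2)$. A functor $G$ on $C_\Lambda$ has the tangent lifting property if $G(A[\epsilon])\to G(A)\times G(k[\epsilon])$ is surjective for all $A$. For $X\in F(A)$, $T^1(X/A)$ is the set of isomorphism classes of pairs $(Y,\psi)$ with $Y\in F(A[\epsilon])$ and $\psi\colon Y|_A\to X$ an isomorphism; the map $T^1(X/A)\to T^1(X_0/k)$ is induced by restriction along $A\to k$. *)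

(* Defs.v *)
From mathcomp Require Import all_boot all_algebra.
Set Implicit Arguments.
Unset Strict Implicit.
Unset Printing Implicit Defensive.
Import GRing.Theory.
Local Open Scope ring_scope.

Section RingNotions.
Variable R : comUnitRingType.

Definition nonunit (x : R) : Prop := x \isn't a GRing.unit.

(* Local ring: 1 <> 0 and the non-units form an additive subgroup (then
   they are the unique maximal ideal m_R). *)
Definition is_local : Prop :=
  (1 : R) != 0 /\ forall x y : R, nonunit x -> nonunit y -> nonunit (x + y).

Definition is_ideal (I : R -> Prop) : Prop :=
  [/\ I 0, (forall x y, I x -> I y -> I (x + y)) & (forall r x, I x -> I (r * x))].

Definition noetherian : Prop :=
  forall I : nat -> R -> Prop, (forall n, is_ideal (I n)) ->
  (forall n x, I n x -> I n.+1 x) ->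
  exists N, forall n, (N <= n)%N -> forall x, I n x -> I N x.

Definition artinian : Prop :=
  forall I : nat -> R -> Prop, (forall n, is_ideal (I n)) ->
  (forall n x, I n.+1 x -> I n x) ->
  exists N, forall n, (N <= n)%N -> forall x, I N x -> I n x.

Fixpoint idpow (I : R -> Prop) (n : nat) : R -> Prop :=
  match n with
  | 0 => fun _ => True
  | n'.+1 => fun x => exists s : seq (R * R),
      (forall p, p \in s -> I p.1 /\ idpow I n' p.2) /\
      x = \sum_(p <- s) p.1 * p.2
  end.

(* m-adic completeness and separatedness, m = maximal ideal = non-units:
   every m-adic Cauchy sequence has a unique limit. *)
Definition complete : Prop :=
  forall a : nat -> R, (forall n, idpow nonunit n (a n.+1 - a n)) ->
  exists l, (forall n, idpow nonunit n (l - a n)) /\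
    forall l', (forall n, idpow nonunit n (l' - a n)) -> l' = l.

End RingNotions.

Definition is_alg_hom (L : comUnitRingType) (A B : comUnitAlgType L)
  (f : A -> B) : Prop :=
  [/\ forall x y, f (x + y) = f x + f y,
      forall x y, f (x * y) = f x * f y,
      f 1 = 1 &
      forall (l : L) x, f (l *: x) = l *: f x].

(* Artin local Lambda-algebra with residue field k = Lambda/m_Lambda:
   local, artinian, and Lambda -> A/m_A surjective. *)
Definition artin_local_k (L : comUnitRingType) (A : comUnitAlgType L) : Prop :=
  [/\ is_local A, artinian A & forall a : A, exists l : L, nonunit (a - l%:A)].

Record Cob (L : comUnitRingType) := MkCob {
  Cty :> comUnitAlgType L;
  Cax : artin_local_k Cty }.

(* An object of C_Lambda which is a field, i.e. (a copy of) k itself. *)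
Definition is_field_obj (L : comUnitRingType) (K : Cob L) : Prop :=
  forall x : K, x != 0 -> x \is a GRing.unit.

(* A model of the dual numbers A[eps] = A[x]/(x^2) inside C_Lambda:
   D with an algebra map i : A -> D and an element e with e^2 = 0 such that
   every element of D is uniquely i a + i b * e; pr : D -> A is the
   projection x |-> 0. *)
Record dualnum (L : comUnitRingType) (A : Cob L) := MkDual {
  dn : Cob L;
  dn_i : A -> dn;
  dn_e : dn;
  dn_pr : dn -> A;
  dn_i_hom : is_alg_hom dn_i;
  dn_pr_hom : is_alg_hom dn_pr;
  dn_e2 : dn_e * dn_e = 0;
  dn_pr_i : forall a, dn_pr (dn_i a) = a;
  dn_pr_e : dn_pr dn_e = 0;
  dn_span : forall d : dn, exists a b, d = dn_i a + dn_i b * dn_e;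
  dn_free : forall a b, dn_i a + dn_i b * dn_e = 0 -> a = 0 /\ b = 0 }.

Arguments dn {L A} _.
Arguments dn_i {L A} _ _.
Arguments dn_e {L A} _.
Arguments dn_pr {L A} _ _.

Definition dual_map (L : comUnitRingType) (A B : Cob L)
  (EA : dualnum A) (EB : dualnum B) (f : A -> B) (phi : dn EA -> dn EB) : Prop :=
  [/\ is_alg_hom phi, (forall a, phi (dn_i EA a) = dn_i EB (f a))
    & phi (dn_e EA) = dn_e EB].

(* Categories cofibered in groupoids over C_Lambda, given as displayed  *)
(* categories: Fob A = objects of F over A, Fhom f X Y = arrows X -> Y  *)
(* of F lying over f : A -> B.                                          *)
Record cofib (L : comUnitRingType) := MkCofib {
  Fob : Cob L -> Type;
  Fhom : forall A B : Cob L, (A -> B) -> Fob A -> Fob B -> Type;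
  Fid : forall (A : Cob L) (X : Fob A), Fhom (@id A) X X;
  Fcomp : forall (A B C : Cob L) (f : A -> B) (g : B -> C)
    (X : Fob A) (Y : Fob B) (Z : Fob C),
    Fhom g Y Z -> Fhom f X Y -> Fhom (g \o f) X Z }.

Arguments Fob {L} _ _.
Arguments Fhom {L} _ {A B} _ _ _.
Arguments Fid {L} _ {A} _.
Arguments Fcomp {L} _ {A B C f g X Y Z} _ _.

Definition is_cofibered_groupoid (L : comUnitRingType) (F : cofib L) : Prop :=
  [/\
      (forall (A B : Cob L) (f : A -> B) X Y (u : Fhom F f X Y),
          Fcomp F (Fid F Y) u = u),
      (forall (A B : Cob L) (f : A -> B) X Y (u : Fhom F f X Y),
          Fcomp F u (Fid F X) = u),
      (forall (A B C D : Cob L) (f : A -> B) (g : B -> C) (h : C -> D)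
          X Y Z W (u : Fhom F f X Y) (v : Fhom F g Y Z) (w : Fhom F h Z W),
          Fcomp F w (Fcomp F v u) = Fcomp F (Fcomp F w v) u),
      (* existence of pushforwards along morphisms of C_Lambda *)
      (forall (A B : Cob L) (f : A -> B), is_alg_hom f ->
          forall X : Fob F A, exists Y : Fob F B, inhabited (Fhom F f X Y)) &
      (* every arrow is cocartesian *)
      (forall (A B C : Cob L) (f : A -> B) (g : B -> C),
          is_alg_hom f -> is_alg_hom g ->
          forall X Y Z (u : Fhom F f X Y) (w : Fhom F (g \o f) X Z),
          exists v : Fhom F g Y Z, Fcomp F v u = w /\
            forall v' : Fhom F g Y Z, Fcomp F v' u = w -> v' = v)].

Definition fiber_is_point (L : comUnitRingType) (F : cofib L) (K : Cob L) : Prop :=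
  inhabited (Fob F K) /\
  forall X Y : Fob F K, exists u : Fhom F (@id K) X Y,
    forall u' : Fhom F (@id K) X Y, u' = u.

Definition Feq (L : comUnitRingType) (F : cofib L) (A B : Cob L) (f g : A -> B)
  (X : Fob F A) (Y : Fob F B) (u : Fhom F f X Y) (w : Fhom F g X Y) : Prop :=
  exists e : f = g, eq_rect f (fun h => Fhom F h X Y) u g e = w.

Definition isoclass (L : comUnitRingType) (F : cofib L) (A : Cob L)
  (X : Fob F A) : Fob F A -> Prop :=
  fun Y => inhabited (Fhom F (@id A) X Y).

Definition is_pi0 (L : comUnitRingType) (F : cofib L) (A : Cob L)
  (c : Fob F A -> Prop) : Prop := exists X, c = isoclass X.

Definition pi0map (L : comUnitRingType) (F : cofib L) (A B : Cob L) (f : A -> B)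
  (c : Fob F A -> Prop) : Fob F B -> Prop :=
  fun Y => exists X, c X /\ inhabited (Fhom F f X Y).

(* Tangent lifting property of pi_0 F:
   pi_0F(A[eps]) -> pi_0F(A) x pi_0F(k[eps]) surjective for all A. *)
Definition pi0_tangent_lifting (L : comUnitRingType) (F : cofib L)
  (E : forall A : Cob L, dualnum A) (K : Cob L) : Prop :=
  forall (A : Cob L) (q : A -> K) (phi : dn (E A) -> dn (E K)),
  is_alg_hom q -> dual_map q phi ->
  forall (a : Fob F A -> Prop) (b : Fob F (dn (E K)) -> Prop),
  is_pi0 a -> is_pi0 b ->
  exists c : Fob F (dn (E A)) -> Prop, is_pi0 c /\ pi0map (dn_pr (E A)) c = a /\ pi0map phi c = b.

(* T^1(X/A): pairs (Y, psi) with Y in F(A[eps]) and psi : Y|_A ~ X,     *)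
(* i.e. an arrow Y -> X of F over pr : A[eps] -> A.                     *)
Definition T1 (L : comUnitRingType) (F : cofib L) (A : Cob L) (EA : dualnum A)
  (X : Fob F A) : Type := { Y : Fob F (dn EA) & Fhom F (dn_pr EA) Y X }.

(* (Z, w) represents the image of (Y, u) under T^1(X/A) -> T^1(X0/k), where
   c : X -> X0 exhibits X0 as the restriction of X along q : A -> k. *)
Definition T1_restr (L : comUnitRingType) (F : cofib L) (A K : Cob L)
  (EA : dualnum A) (EK : dualnum K) (q : A -> K) (phi : dn EA -> dn EK)
  (X : Fob F A) (X0 : Fob F K) (c : Fhom F q X X0)
  (t : T1 EA X) (s : T1 EK X0) : Prop :=
  exists v : Fhom F phi (projT1 t) (projT1 s),
    Feq (Fcomp F (projT2 s) v) (Fcomp F c (projT2 t)).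

Arguments T1_restr {L F A K EA EK q} phi {X X0} c t s.

Definition T1_surjective (L : comUnitRingType) (F : cofib L)
  (E : forall A : Cob L, dualnum A) (K : Cob L) : Prop :=
  forall (A : Cob L) (q : A -> K) (phi : dn (E A) -> dn (E K)),
  is_alg_hom q -> dual_map q phi ->
  forall (X : Fob F A) (X0 : Fob F K) (c : Fhom F q X X0),
  forall s : T1 (E K) X0, exists t : T1 (E A) X, T1_restr phi c t s.

(* Main.v *)
Require Import Defs.
From mathcomp Require Import all_boot all_algebra.
From Stdlib Require Import FunctionalExtensionality PropExtensionality.

Lemma id_alg_hom (L : comUnitRingType) (A : Cob L) : is_alg_hom (@id A).
Proof. by split. Qed.

Lemma pi0_iso (L : comUnitRingType) (F : cofib L) (hF : is_cofibered_groupoid F)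
  (A B : Cob L) (f : A -> B) (hf : is_alg_hom f) (Y : Fob F A) (X : Fob F B)
  (u : Fhom F f Y X) : pi0map f (isoclass Y) = isoclass X.
Proof.
case: hF => Hidl Hidr Hass Hpush Hcoc.
apply: functional_extensionality => W; apply: propositional_extensionality; split.
- move=> [Y' [[i] [h]]].
  have w : Fhom F ((@id B) \o f) Y W by exact (Fcomp F h i).
  have [v _] := Hcoc _ _ _ f (@id B) hf (@id_alg_hom L B) Y X W u w.
  by constructor; exact v.
- move=> [i]; exists Y; split; constructor; first exact (Fid F Y).
  exact (Fcomp F i u).
Qed.

Theorem lemma1 (L : comUnitRingType)
  (hLloc : is_local L) (hLnoeth : noetherian L) (hLcomp : complete L)
  (E : forall A : Cob L, dualnum A)
  (K : Cob L) (hK : is_field_obj K)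
  (F : cofib L) (hF : is_cofibered_groupoid F) (hpt : fiber_is_point F K) :
  pi0_tangent_lifting F E K <-> T1_surjective F E K.
Proof.
have hF' := hF.
case: hF' => Hidl Hidr Hass Hpush Hcoc.
case: hpt => _ Hpt.
split.
- move=> HT A q phi hq hphi X X0 c [Z w].
  have hphi' := hphi; case: hphi' => hphih hphii hphie.
  have [cc [[Y ->] [H1 H2]]] :=
    HT A q phi hq hphi (isoclass X) (isoclass Z) (ex_intro _ X erefl) (ex_intro _ Z erefl).
  have hX : isoclass X X by constructor; exact (Fid F X).
  rewrite -H1 in hX; case: hX => Y' [[i] [h]].
  have u0 : Fhom F (dn_pr (E A)) Y X by exact (Fcomp F h i).
  have hZ : isoclass Z Z by constructor; exact (Fid F Z).
  rewrite -H2 in hZ; case: hZ => Y'' [[i'] [h']].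
  have v : Fhom F phi Y Z by exact (Fcomp F h' i').
  exists (existT _ Y u0); exists v => /=.
  have e : dn_pr (E K) \o phi = q \o dn_pr (E A).
    apply: functional_extensionality => d /=.
    have [a [b ->]] := dn_span d.
    have [ia _ _ _] := dn_i_hom (E A).
    have [ik _ _ _] := dn_i_hom (E K).
    have [pa ma _ _] := dn_pr_hom (E A).
    have [pk mk _ _] := dn_pr_hom (E K).
    have [ph mh _ _] := hphih.
    rewrite ph mh !hphii hphie pa ma pk mk !dn_pr_i ?dn_pr_e ?(dn_pr_e (E K)).
    by rewrite !GRing.mulr0 !GRing.addr0.
  exists e.
  set W := eq_rect _ _ _ _ e.
  have [c' [Hc' _]] := Hcoc _ _ _ (dn_pr (E A)) q (dn_pr_hom (E A)) hq Y X X0 u0 W.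
  suff -> : c = c' by rewrite Hc'.
  have [alpha [Ha _]] := Hcoc _ _ _ q (@id K) hq (@id_alg_hom L K) X X0 X0 c c'.
  have [u1 Hu1] := Hpt X0 X0.
  rewrite -Ha (Hu1 alpha) -(Hu1 (Fid F X0)).
  by rewrite Hidl.
- move=> HT A q phi hq hphi a b [X ->] [Z ->].
  have [X0 [c]] := Hpush _ _ q hq X.
  have [Z0 [w']] := Hpush _ _ (dn_pr (E K)) (dn_pr_hom (E K)) Z.
  have [iso _] := Hpt Z0 X0.
  have w : Fhom F (dn_pr (E K)) Z X0 by exact (Fcomp F iso w').
  have [[Y u] [v _]] := HT A q phi hq hphi X X0 c (existT _ Z w).
  simpl in u, v.
  have [hphih _ _] := hphi.
  exists (isoclass Y); split; first by exists Y.
  split; [exact: (@pi0_iso L F hF _ _ (dn_pr (E A)) (dn_pr_hom (E A)) Y X u) | exact: (@pi0_iso L F hF _ _ phi hphih Y Z v)].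
Qed.
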